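(* Let $(V,P)$ be a finite, connected, lazy, reversible Markov chain equipped with the combinatorial distance $d$, and let $x\sim y$. The following are equivalent: (i) the edge $(x,y)$ has non-negative Ollivier sectional curvature; (ii) for all $f$ with $|f(u)-f(v)|\le d(u,v)$ for all $u,v$ and $f(y)-f(x)=1$, and all $\lambda\ge0$, \[ \frac{\Delta e^{\lambda f}(x)}{e^{\lambda f(x)}}\ge\frac{\Delta e^{\lambda f}(y)}{e^{\lambda f(y)}}\quad\text{and}\quad \frac{\Delta e^{-\lambda f}(x)}{e^{-\lambda f(x)}}\le\frac{\Delta e^{-\lambda f}(y)}{e^{-\lambda f(y)}}. \]
   Context: Lazy means $\sum_yP(x,y)=1$ and $P(x,x)\ge\frac12$ for all $x$; $P$ has symmetric support, and there is a probability $m$ with $m(x)P(x,y)=m(y)P(y,x)$. $x\sim y$ means $x\ne y$ and $P(x,y)>0$; the combinatorial distance is the minimal number of edges on a path. $\Delta f(x)=\sum_zP(x,z)(f(z)-f(x))$. The edge $x\sim y$ has non-negative Ollivier sectional curvature if there is a coupling $\pi:V\times V\to[0,\infty)$ of $P(x,\cdot)$ and $P(y,\cdot)$ (i.e. $\sum_{y'}\pi(x',y')=P(x,x')$, $\sum_{x'}\pi(x',y')=P(y,y')$) with $d(x',y')\le1$ whenever $\pi(x',y')>0$. *)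

(* Defs.v *)
From HB Require Import structures.
From mathcomp Require Import all_boot all_order all_algebra.
From mathcomp Require Import all_classical all_reals.
From mathcomp Require Import sequences exp.
Set Implicit Arguments. Unset Strict Implicit. Unset Printing Implicit Defensive.
Import Order.TTheory GRing.Theory Num.Theory.
Local Open Scope ring_scope.

Section MarkovDefs.
Variables (R : realType) (V : finType) (P : V -> V -> R).

Definition lazy_chain : Prop :=
  (forall x y, 0 <= P x y) /\
  (forall x, \sum_(y : V) P x y = 1) /\
  (forall x, 1 / 2 <= P x x).

Definition sym_support : Prop := forall x y, (0 < P x y) <-> (0 < P y x).

Definition reversible : Prop :=
  exists m : V -> R,
    (forall x, 0 <= m x) /\ (\sum_(x : V) m x = 1) /\
    (forall x y, m x * P x y = m y * P y x).

Definition adj (x y : V) : bool := (x != y) && (0 < P x y).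

Fixpoint walkb (n : nat) (x y : V) : bool :=
  match n with
  | 0 => x == y
  | k.+1 => [exists z, adj x z && walkb k z y]
  end.

Definition connected_chain : Prop := forall x y, exists n, walkb n x y.

(* In a connected graph on #|V| vertices such an n exists and is < #|V|,
   so searching n in [0, #|V|) yields the true graph distance. *)
Definition dist (x y : V) : nat := find (fun n => walkb n x y) (iota 0 #|V|).

Definition Lap (f : V -> R) (x : V) : R := \sum_(z : V) P x z * (f z - f x).

Definition nonneg_sectional_curv (x y : V) : Prop :=
  exists pi : V -> V -> R,
    (forall x' y', 0 <= pi x' y') /\
    (forall x', \sum_(y' : V) pi x' y' = P x x') /\
    (forall y', \sum_(x' : V) pi x' y' = P y y') /\
    (forall x' y', 0 < pi x' y' -> (dist x' y' <= 1)%N).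

End MarkovDefs.

(* Main.v *)
Require Import Defs.
From HB Require Import structures.
From mathcomp Require Import all_boot all_order all_algebra.
From mathcomp Require Import all_classical all_reals.
From mathcomp Require Import sequences exp.
From mathcomp Require Import lra.
Import Order.TTheory GRing.Theory Num.Theory.
Local Open Scope ring_scope.
Set Implicit Arguments. Unset Strict Implicit. Unset Printing Implicit Defensive.
Section Hall.
Variables (R : realType) (T : finType) (E : T -> T -> bool).

Definition NB (B : {set T}) : {set T} := [set j | [exists i in B, E i j]].

Definition subcoup (pi : T -> T -> R) (a b : T -> R) :=
  [/\ (forall i j, 0 <= pi i j), (forall i, \sum_j pi i j = a i),
      (forall j, \sum_i pi i j <= b j) & (forall i j, pi i j != 0 -> E i j)].

Definition hallc (mu nu : T -> R) :=
  forall B : {set T}, \sum_(i in B) mu i <= \sum_(j in NB B) nu j.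

Definition supp (g : T -> R) : {set T} := [set i | g i != 0].

Lemma subcoup_add pi1 pi2 a1 a2 b1 b2 :
  subcoup pi1 a1 b1 -> subcoup pi2 a2 b2 ->
  subcoup (fun i j => pi1 i j + pi2 i j) (fun i => a1 i + a2 i)
          (fun j => b1 j + b2 j).
Proof.
case=> p0 pr pc pE [q0 qr qc qE]; split.
- by move=> i j; rewrite addr_ge0.
- by move=> i; rewrite big_split /= pr qr.
- by move=> j; rewrite big_split /= lerD.
- move=> i j; have [/eqP->|/(pE i j) h _ //] := boolP (pi1 i j == 0).
  rewrite add0r; exact: qE.
Qed.

Lemma subcoup_ext pi a b a' b' : subcoup pi a b ->
  (forall i, a i = a' i) -> (forall j, b j <= b' j) -> subcoup pi a' b'.
Proof.
case=> p0 pr pc pE ha hb; split=> //.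
- by move=> i; rewrite pr.
- by move=> j; apply: le_trans (pc j) (hb j).
Qed.

Lemma subcoup_single i0 j0 t : 0 <= t -> E i0 j0 ->
  subcoup (fun i j => if (i == i0) && (j == j0) then t else 0)
          (fun i => if i == i0 then t else 0)
          (fun j => if j == j0 then t else 0).
Proof.
move=> t0 hE; split.
- by move=> i j; case: ifP.
- move=> i; case: (eqVneq i i0) => [_|ne] /=.
  + rewrite (bigD1 j0) //= eqxx big1 ?addr0 // => j /negbTE -> //.
  + by rewrite big1.
- move=> j; case: (eqVneq j j0) => [_|ne] /=.
  + rewrite (bigD1 i0) //= eqxx big1 ?addr0 // => i /negbTE -> //.
  + by rewrite big1 // => i _; rewrite andbF.
- move=> i j; case: (eqVneq i i0) => [->|] ; case: (eqVneq j j0) => [->|] //=;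
    by rewrite ?eqxx ?andbF.
Qed.

Lemma subcoup_zero mu nu : (forall i, mu i = 0) -> (forall j, 0 <= nu j) ->
  subcoup (fun _ _ => 0) mu nu.
Proof.
move=> h nu0; split => //.
- by move=> i; rewrite big1 // h.
- by move=> j; rewrite big1.
- by move=> i j; rewrite eqxx.
Qed.

Lemma sum_eq_supp (X Y : {set T}) (g : T -> R) :
  (forall i, g i != 0 -> (i \in X) = (i \in Y)) ->
  \sum_(i in X) g i = \sum_(i in Y) g i.
Proof.
move=> H; rewrite [LHS]big_mkcond [RHS]big_mkcond /=; apply: eq_bigr => i _.
by have [->|/H->] := eqVneq (g i) 0; rewrite ?if_same.
Qed.

Lemma sum_le_supp (X Y : {set T}) (g : T -> R) : (forall i, 0 <= g i) ->
  (forall i, g i != 0 -> i \in X -> i \in Y) ->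
  \sum_(i in X) g i <= \sum_(i in Y) g i.
Proof.
move=> g0 H; rewrite [X in X <= _]big_mkcond [X in _ <= X]big_mkcond /=.
apply: ler_sum => i _.
have [->|/H hi] := eqVneq (g i) 0; first by rewrite !if_same.
case: (boolP (i \in X)) => [/hi -> //|_]; by case: ifP.
Qed.

Lemma sum_if1 (B : {set T}) i0 (t : R) :
  \sum_(i in B) (if i == i0 then t else 0) = if i0 \in B then t else 0.
Proof.
case: (boolP (i0 \in B)) => h.
  rewrite (bigD1 i0) //= eqxx big1 ?addr0 // => i /andP[_ /negbTE ->] //.
rewrite big1 // => i hi; have /negbTE-> // : i != i0.
by apply: contraNneq h => <-.
Qed.

Lemma sum_ifin (B A : {set T}) (g : T -> R) :
  \sum_(i in B) (if i \in A then g i else 0) = \sum_(i in B :&: A) g i.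
Proof.
rewrite [RHS]big_mkcond [LHS]big_mkcond; apply: eq_bigr => i _.
by rewrite inE; case: (i \in B); case: (i \in A).
Qed.

Lemma sum_ifnotin (B A : {set T}) (g : T -> R) :
  \sum_(i in B) (if i \in A then 0 else g i) = \sum_(i in B :\: A) g i.
Proof.
rewrite [RHS]big_mkcond [LHS]big_mkcond; apply: eq_bigr => i _.
by rewrite inE; case: (i \in B); case: (i \in A).
Qed.

Lemma card_lt_supp (g g' h h' : T -> R) k :
  (forall i, g' i != 0 -> g i != 0) -> (forall j, h' j != 0 -> h j != 0) ->
  g k != 0 -> g' k = 0 ->
  (#|supp g'| + #|supp h'| < #|supp g| + #|supp h|)%N.
Proof.
move=> s1 s2 gk g'k.
have p1 : supp g' \proper supp g.
  apply/properP; split.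
    by apply/fintype.subsetP => i; rewrite !inE; exact: s1.
  by exists k; rewrite !inE ?g'k ?eqxx.
have p2 : supp h' \subset supp h.
  by apply/fintype.subsetP => i; rewrite !inE; exact: s2.
by rewrite -addSn leq_add // ?proper_card // subset_leq_card.
Qed.

Lemma ex_minR (U : finType) (p : pred U) (F : U -> R) :
  (exists x, p x) -> exists x, p x /\ forall y, p y -> F x <= F y.
Proof.
case=> x0 px0.
case: (@arg_minP _ R U x0 p F px0) => i pi hi.
by exists i; split.
Qed.

Lemma min3 (a b c : R) : exists t, [/\ t <= a, t <= b, t <= c &
  [\/ t = a, t = b | t = c]].
Proof.
have [hab|hab] := leP a b.
  have [hac|hac] := leP a c.
    by exists a; split => //; [exact: Or31].
  by exists c; split => //; [lra | lra | exact: Or33].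
have [hbc|hbc] := leP b c.
  by exists b; split => //; [lra | exact: Or32].
by exists c; split => //; [lra | lra | exact: Or33].
Qed.

End Hall.
Section Hall2.
Variables (R : realType) (T : finType) (E : T -> T -> bool).
Local Notation NB := (NB E).
Local Notation subcoup := (@subcoup R T E).
Local Notation hallc := (@hallc R T E).

Lemma hall_ind n : forall mu nu : T -> R,
  (#|supp mu| + #|supp nu| <= n)%N -> (forall i, 0 <= mu i) ->
  (forall j, 0 <= nu j) -> hallc mu nu -> exists pi, subcoup pi mu nu.
Proof.
elim: n => [|n IH] mu nu hn mu0 nu0 hH;
  (case: (pickP (fun i => mu i != 0)) => [i0 hi0|hz]; last first;
  [by exists (fun _ _ => 0); apply: subcoup_zero => // i;
     apply/eqP; move/negbFE: (hz i) | ]).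
  move: hn; rewrite leqn0 addn_eq0 => /andP[/eqP/cards0_eq h _].
  by have : i0 \in supp mu; [rewrite inE | rewrite h inE].
have mi0 : 0 < mu i0 by rewrite lt0r hi0 mu0.
have [j0 hj0 nj0] : exists2 j0, j0 \in NB [set i0] & nu j0 != 0.
  case: (boolP [exists j in NB [set i0], nu j != 0]) => [/exists_inP//|/exists_inPn h].
  have := hH [set i0]; rewrite big_set1 big1 => [|j /h /negbNE /eqP //].
  by rewrite leNgt mi0.
have hE0 : E i0 j0.
  by move: hj0; rewrite inE => /exists_inP [i]; rewrite inE => /eqP ->.
have nj0p : 0 < nu j0 by rewrite lt0r nj0 nu0.
have [t [t0 tmu tnu tsl tcase]] : exists t, [/\ 0 <= t, t <= mu i0, t <= nu j0,
   (forall A : {set T}, (i0 \notin A) && (j0 \in NB A) ->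
       t <= \sum_(j in NB A) nu j - \sum_(i in A) mu i) &
   [\/ t = mu i0, t = nu j0 | exists2 A0 : {set T}, (i0 \notin A0) && (j0 \in NB A0) &
        t = \sum_(j in NB A0) nu j - \sum_(i in A0) mu i]].
  case: (pickP (fun A : {set T} => (i0 \notin A) && (j0 \in NB A))) => [A1 hA1|hno].
  - have [A0 [hA0 hmin]] := @ex_minR _ _
      (fun A : {set T} => (i0 \notin A) && (j0 \in NB A))
      (fun A : {set T} => \sum_(j in NB A) nu j - \sum_(i in A) mu i)
      (ex_intro _ A1 hA1).
    have s0 : 0 <= \sum_(j in NB A0) nu j - \sum_(i in A0) mu i.
      by rewrite subr_ge0.
    have [t [ta tb tc tcs]] := min3 (mu i0) (nu j0)
      (\sum_(j in NB A0) nu j - \sum_(i in A0) mu i).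
    exists t; split => //.
    + by case: tcs => ->; [exact: ltW | exact: ltW | exact: s0].
    + by move=> A hA; apply: le_trans tc (hmin A hA).
    + by case: tcs => ?; [exact: Or31 | exact: Or32 | apply: Or33; exists A0].
  - have [t [ta tb tc tcs]] := min3 (mu i0) (nu j0) (mu i0).
    exists t; split => //.
    + by case: tcs => ->; exact: ltW.
    + by move=> A; rewrite hno.
    + by case: tcs => ?; [exact: Or31 | exact: Or32 | exact: Or31].
pose mu' i := mu i - (if i == i0 then t else 0).
pose nu' j := nu j - (if j == j0 then t else 0).
have mu'0 i : 0 <= mu' i.
  rewrite /mu'; case: (eqVneq i i0) => [->|_]; last by rewrite subr0.
  by rewrite subr_ge0.
have nu'0 j : 0 <= nu' j.
  rewrite /nu'; case: (eqVneq j j0) => [->|_]; last by rewrite subr0.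
  by rewrite subr_ge0.
have smu i : mu' i != 0 -> mu i != 0.
  rewrite /mu'; case: (eqVneq i i0) => [->|_] //; by rewrite subr0.
have snu j : nu' j != 0 -> nu j != 0.
  rewrite /nu'; case: (eqVneq j j0) => [->|_] //; by rewrite subr0.
have hall' : hallc mu' nu'.
  move=> B; rewrite /mu' /nu' !sumrB !sum_if1.
  have := hH B.
  case: (boolP (i0 \in B)) => hiB.
    have -> : j0 \in NB B by rewrite inE; apply/exists_inP; exists i0.
    lra.
  case: (boolP (j0 \in NB B)) => hjB; last lra.
  have := tsl B; rewrite hiB hjB => /(_ isT); lra.
have [pi' hpi'] : exists pi', subcoup pi' mu' nu'.
  have [tm|tm] := eqVneq t (mu i0).
    apply: (IH mu' nu') => //.
    rewrite -ltnS; apply: leq_trans hn; apply: (card_lt_supp (k := i0)) => //.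
    by rewrite /mu' eqxx tm subrr.
  have [tn|tn] := eqVneq t (nu j0).
    apply: (IH mu' nu') => //.
    rewrite -ltnS; apply: leq_trans hn; rewrite addnC [X in (_ <= X)%N]addnC.
    apply: (card_lt_supp (k := j0)) => //.
    by rewrite /nu' eqxx tn subrr.
  case: tcase => [/eqP|/eqP|[A0 /andP[iA0 jA0] tA0]]; rewrite ?(negbTE tm) ?(negbTE tn) //.
  have tlm : t < mu i0 by rewrite lt_neqAle tm tmu.
  have tln : t < nu j0 by rewrite lt_neqAle tn tnu.
  have tight : \sum_(i in A0) mu' i = \sum_(j in NB A0) nu' j.
    rewrite /mu' /nu' !sumrB !sum_if1 (negbTE iA0) jA0; lra.
  pose mu1 i := if i \in A0 then mu' i else 0.
  pose mu2 i := if i \in A0 then 0 else mu' i.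
  pose nu1 j := if j \in NB A0 then nu' j else 0.
  pose nu2 j := if j \in NB A0 then 0 else nu' j.
  have [i1 /andP[i1A i1m]] : exists i1, (i1 \in A0) && (mu' i1 != 0).
    case: (pickP (fun i => (i \in A0) && (mu' i != 0))) => [i1 h|h]; first by exists i1.
    have : 0 < \sum_(j in NB A0) nu' j.
      rewrite (bigD1 j0) //=; apply: (@lt_le_trans _ _ (nu' j0)).
        by rewrite /nu' eqxx subr_gt0.
      by rewrite lerDl sumr_ge0.
    rewrite -tight big1 ?ltxx // => i iA; have := h i; rewrite iA /=.
    by move/negbFE/eqP.
  have H1 : exists pi1, subcoup pi1 mu1 nu1.
    apply: (IH mu1 nu1).
    - rewrite -ltnS; apply: leq_trans hn; apply: (card_lt_supp (k := i0)) => //.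
      + by move=> i; rewrite /mu1; case: ifP => _; [exact: smu | by rewrite eqxx].
      + by move=> j; rewrite /nu1; case: ifP => _; [exact: snu | by rewrite eqxx].
      + by rewrite /mu1 (negbTE iA0).
    - by move=> i; rewrite /mu1; case: ifP.
    - by move=> j; rewrite /nu1; case: ifP.
    - move=> B; rewrite /mu1 /nu1 !sum_ifin.
      apply: le_trans (hall' (B :&: A0)) _.
      apply: sum_le_supp => // j _; rewrite !inE => /exists_inP [i].
      rewrite inE => /andP[iB iA] hij.
      by apply/andP; split; apply/exists_inP; exists i.
  have H2 : exists pi2, subcoup pi2 mu2 nu2.
    apply: (IH mu2 nu2).
    - rewrite -ltnS; apply: leq_trans hn; apply: (card_lt_supp (k := i1)) => //.
      + by move=> i; rewrite /mu2; case: ifP => _; [by rewrite eqxx | exact: smu].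
      + by move=> j; rewrite /nu2; case: ifP => _; [by rewrite eqxx | exact: snu].
      + by apply: smu.
      + by rewrite /mu2 i1A.
    - by move=> i; rewrite /mu2; case: ifP.
    - by move=> j; rewrite /nu2; case: ifP.
    - move=> B; rewrite /mu2 /nu2 !sum_ifnotin.
      pose C := (B :\: A0) :|: A0.
      have := hall' C.
      rewrite (big_setID A0) /= [X in _ <= X](big_setID (NB A0)) /=.
      have e1 : \sum_(i in C :&: A0) mu' i = \sum_(i in A0) mu' i.
        apply: sum_eq_supp => i _; rewrite !inE; by case: (i \in A0); case: (i \in B).
      have e2 : \sum_(i in C :\: A0) mu' i = \sum_(i in B :\: A0) mu' i.
        apply: sum_eq_supp => i _; rewrite !inE; by case: (i \in A0); case: (i \in B).
      have e3 : \sum_(j in NB C :&: NB A0) nu' j = \sum_(j in NB A0) nu' j.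
        apply: sum_eq_supp => j _; rewrite !inE.
        case: (boolP [exists i in A0, E i j]) => [h|_]; last by rewrite andbF.
        rewrite andbT; case/exists_inP: h => i iA hij.
        by apply/exists_inP; exists i => //; rewrite !inE iA orbT.
      rewrite e1 e2 e3 tight => hh.
      have hh' : \sum_(i in B :\: A0) mu' i <= \sum_(j in NB C :\: NB A0) nu' j by lra.
      apply: le_trans hh' _; apply: sum_le_supp => // j _.
      rewrite !inE => /andP[hn0 /exists_inP [i]].
      rewrite !inE => hi hij; apply/andP; split => //.
      apply/exists_inP; exists i => //.
      case: (boolP (i \in A0)) hi => iA /=; last by rewrite orbF.
      by move=> _; move: hn0; apply: contraNT => _; apply/exists_inP; exists i.
  case: H1 => pi1 h1; case: H2 => pi2 h2.
  exists (fun i j => pi1 i j + pi2 i j).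
  apply: subcoup_ext (subcoup_add h1 h2) _ _.
  - by move=> i; rewrite /mu1 /mu2; case: ifP; rewrite ?addr0 ?add0r.
  - by move=> j; rewrite /nu1 /nu2; case: ifP; rewrite ?addr0 ?add0r.
exists (fun i j => pi' i j + (if (i == i0) && (j == j0) then t else 0)).
apply: subcoup_ext (subcoup_add hpi' (subcoup_single t0 hE0)) _ _.
- by move=> i; rewrite /mu' subrK.
- by move=> j; rewrite /nu' subrK.
Qed.

Lemma hall (mu nu : T -> R) : (forall i, 0 <= mu i) ->
  (forall j, 0 <= nu j) -> hallc mu nu -> exists pi, subcoup pi mu nu.
Proof. exact: (@hall_ind (#|supp mu| + #|supp nu|)). Qed.

End Hall2.
Section DistLemmas.
Variables (R : realType) (V : finType) (P : V -> V -> R).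
Hypothesis Hsym : sym_support P.

Lemma dist_le_walk k u v : walkb P k u v -> (dist P u v <= k)%N.
Proof.
move=> hw; rewrite /dist.
case: (ltnP k #|V|) => hk.
  rewrite leqNgt; apply/negP => hlt.
  have := before_find 0 hlt; rewrite nth_iota // add0n /= hw //.
by apply: leq_trans (find_size _ _) _; rewrite size_iota.
Qed.

Lemma dist_le_card u v : (dist P u v <= #|V|)%N.
Proof. by rewrite /dist; apply: leq_trans (find_size _ _) _; rewrite size_iota. Qed.

Lemma dist_walk u v : (dist P u v < #|V|)%N -> walkb P (dist P u v) u v.
Proof.
move=> h.
have hh : has (fun n => walkb P n u v) (iota 0 #|V|) by rewrite has_find size_iota.
have := nth_find 0 hh; rewrite nth_iota ?add0n //.
Qed.

Lemma walk_cat m n u v w : walkb P m u v -> walkb P n v w -> walkb P (m + n) u w.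
Proof.
elim: m u => [|m IH] u /=; first by move=> /eqP ->.
case/existsP => z /andP[az wz] hn; rewrite ?addSn /=; apply/existsP; exists z.
by rewrite az /=; exact: IH.
Qed.

Lemma adj_sym u v : adj P u v -> adj P v u.
Proof. by rewrite /adj => /andP[ne p]; rewrite eq_sym ne /=; apply/Hsym. Qed.

Lemma walk_rev n u v : walkb P n u v -> walkb P n v u.
Proof.
elim: n u => [|n IH] u /=; first by rewrite eq_sym.
case/existsP => z /andP[az wz].
have h1 : walkb P 1 z u by apply/existsP; exists u; rewrite adj_sym // eqxx.
have := walk_cat (IH _ wz) h1; rewrite addn1 => h; exact: h.
Qed.

Lemma dist_sym_le u v : (dist P v u <= dist P u v)%N.
Proof.
case: (ltnP (dist P u v) #|V|) => h.
  by apply: dist_le_walk; apply: walk_rev; apply: dist_walk.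
by apply: leq_trans (dist_le_card _ _) h.
Qed.

Lemma dist_sym u v : dist P u v = dist P v u.
Proof. by apply/eqP; rewrite eqn_leq !dist_sym_le. Qed.

Lemma dist_refl u : dist P u u = 0%N.
Proof. by apply/eqP; rewrite -leqn0; apply: (@dist_le_walk 0) => /=. Qed.

Lemma dist0 u v : dist P u v = 0%N -> u = v.
Proof.
move=> h; have c : (0 < #|V|)%N by apply/card_gt0P; exists u.
by have := dist_walk (u:=u) (v:=v); rewrite h => /(_ c) /= /eqP.
Qed.

Lemma dist_P u v : 0 < P u v -> (dist P u v <= 1)%N.
Proof.
move=> p; case: (eqVneq u v) => [->|ne]; first by rewrite dist_refl.
apply: (@dist_le_walk 1) => /=; apply/existsP; exists v.
by rewrite /adj ne p eqxx.
Qed.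

End DistLemmas.
Section Main.
Variables (R : realType) (V : finType) (P : V -> V -> R).
Hypothesis P0 : forall u v, 0 <= P u v.
Hypothesis Psum : forall u, \sum_v P u v = 1.
Hypothesis Hsym : sym_support P.

Definition Ed (i j : V) : bool := (dist P i j <= 1)%N.
Local Notation N := (NB Ed).

Definition hfun (A : {set V}) (z : V) : R :=
  if z \in A then 0 else if z \in N A then -1 else -2.

Lemma hfun_range A z : -2 <= hfun A z /\ hfun A z <= 0.
Proof. by rewrite /hfun; case: ifP => _; [|case: ifP => _]; split; lra. Qed.

Lemma hfun_step A a b : (dist P a b <= 1)%N -> hfun A a <= hfun A b + 1.
Proof.
move=> d; have [hb1 hb2] := hfun_range A b.
rewrite {1}/hfun; case: ifP => aA.
  have bN : b \in N A by rewrite inE; apply/exists_inP; exists a.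
  by rewrite /hfun bN; case: ifP => _ /=; lra.
by case: ifP => _; lra.
Qed.

Lemma hfun_lip A u v : `|hfun A u - hfun A v| <= (dist P u v)%:R.
Proof.
case: (eqVneq u v) => [->|ne]; first by rewrite subrr normr0 ler0n.
have d1 : (1 <= dist P u v)%N.
  by rewrite lt0n; apply/eqP => /dist0 h; rewrite h eqxx in ne.
have [hu1 hu2] := hfun_range A u; have [hv1 hv2] := hfun_range A v.
case: (leqP (dist P u v) 1) => hd.
  have e1 := hfun_step A hd.
  have e2 : hfun A v <= hfun A u + 1 by apply: hfun_step; rewrite (dist_sym Hsym).
  have : (1 <= (dist P u v)%:R :> R) by rewrite ler1n.
  rewrite ler_norml; move=> h; apply/andP; split; lra.
have : ((2%N)%:R <= (dist P u v)%:R :> R) by rewrite ler_nat.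
rewrite ler_norml; move=> h; apply/andP; split; lra.
Qed.

Lemma key u w (A : {set V}) : (dist P u w <= 1)%N ->
  (forall a, a \in A -> ~~ (dist P u a <= 1)%N) ->
  (hfun A w - hfun A u = 1 -> forall lam, 0 <= lam ->
     \sum_z P w z * expR (lam * hfun A z - lam * hfun A w) <=
     \sum_z P u z * expR (lam * hfun A z - lam * hfun A u)) ->
  \sum_(z in A) P w z <= \sum_(z in N A) P u z.
Proof.
move=> duw hA H.
case: (pickP (fun a => (a \in A) && (0 < P w a))) => [a /andP[aA pwa]|hno]; last first.
  rewrite big1 ?sumr_ge0 // => z zA; have := hno z; rewrite zA /= => /negbT.
  by rewrite -leNgt => h0; apply/eqP; rewrite eq_le h0 P0.
have huA : u \notin A by apply/negP => /hA; rewrite dist_refl.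
have huN : u \notin N A.
  by rewrite inE; apply/exists_inPn => b /hA; rewrite /Ed (dist_sym Hsym).
have hu : hfun A u = -2 by rewrite /hfun (negbTE huA) (negbTE huN).
have hwA : w \notin A by apply/negP => /hA; rewrite duw.
have hwN : w \in N A.
  by rewrite inE; apply/exists_inP; exists a => //; rewrite /Ed (dist_sym Hsym); exact: dist_P.
have hw : hfun A w = -1 by rewrite /hfun (negbTE hwA) hwN.
have heq : hfun A w - hfun A u = 1 by rewrite hw hu; lra.
have {}H := H heq.
set S := \sum_(z in A) P w z; set Tt := \sum_(z in N A) P u z.
have keyl lam : 0 <= lam -> S * expR lam <= Tt * expR lam + 1.
  move=> l0; have := H lam l0.
  have L : S * expR lam <= \sum_z P w z * expR (lam * hfun A z - lam * hfun A w).
    rewrite /S big_distrl /= big_mkcond /=; apply: ler_sum => z _.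
    case: ifP => zA; last by rewrite mulr_ge0 ?P0 ?expR_ge0.
    rewrite hw /hfun zA; rewrite (_ : lam * 0 - lam * -1 = lam) //; lra.
  have U : \sum_z P u z * expR (lam * hfun A z - lam * hfun A u) <= Tt * expR lam + 1.
    rewrite -(Psum u) /Tt big_distrl /= [X in _ <= X + _]big_mkcond /= -big_split /=.
    apply: ler_sum => z _.
    have [pz|pz] := eqVneq (P u z) 0.
      by rewrite pz mul0r mul0r addr0; case: ifP.
    have zA : z \notin A.
      by apply/negP => /hA; rewrite dist_P // lt0r pz P0.
    rewrite hu /hfun (negbTE zA); case: ifP => zN.
      rewrite (_ : lam * -1 - lam * -2 = lam); last lra.
      by rewrite lerDl P0.
    rewrite (_ : lam * -2 - lam * -2 = 0); last lra.
    by rewrite expR0 mulr1 add0r.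
  move=> M; apply: le_trans L (le_trans M U).
rewrite leNgt; apply/negP => hlt.
have d0 : 0 < S - Tt by rewrite subr_gt0.
have l0 : 0 <= (S - Tt)^-1 by rewrite invr_ge0 ltW.
have := keyl _ l0.
have e1 := expR_ge1Dx (S - Tt)^-1.
have := ler_wpM2l (ltW d0) e1.
rewrite mulrDr mulr1 mulfV ?lt0r_neq0 // mulrBl.
lra.
Qed.

Lemma lap_ratio (c : R) (k : V -> R) u :
  Lap P (fun z => expR (c * k z)) u / expR (c * k u) =
  \sum_z P u z * expR (c * k z - c * k u) - 1.
Proof.
rewrite /Lap -(Psum u) big_distrl /= -sumrB; apply: eq_bigr => z _.
rewrite expRB mulrBr mulrBl -!mulrA mulfV ?mulr1 //.
exact: lt0r_neq0 (expR_gt0 _).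
Qed.

Lemma coup_le (pi : V -> V -> R) (a b G H : V -> R) :
  (forall i j, 0 <= pi i j) -> (forall i, \sum_j pi i j = a i) ->
  (forall j, \sum_i pi i j = b j) ->
  (forall i j, pi i j != 0 -> G i <= H j) ->
  \sum_i a i * G i <= \sum_j b j * H j.
Proof.
move=> p0 pr pc hGH.
apply: (@le_trans _ _ (\sum_i \sum_j pi i j * G i)).
  by apply: ler_sum => i _; rewrite -pr big_distrl.
apply: (@le_trans _ _ (\sum_i \sum_j pi i j * H j)); last first.
  by rewrite exchange_big /=; apply: ler_sum => j _; rewrite -pc big_distrl.
apply: ler_sum => i _; apply: ler_sum => j _.
have [->|nz] := eqVneq (pi i j) 0; first by rewrite !mul0r.
by apply: ler_wpM2l => //; apply: hGH.
Qed.

End Main.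
Unset Implicit Arguments.

Theorem theorem4p3 (R : realType) (V : finType) (P : V -> V -> R)
  (Hlazy : lazy_chain P) (Hsym : sym_support P) (Hrev : reversible P)
  (Hconn : connected_chain P) (x y : V) (Hxy : adj P x y) :
  nonneg_sectional_curv P x y <->
  (forall f : V -> R,
     (forall u v, `|f u - f v| <= ((dist P u v)%:R : R)) ->
     f y - f x = 1 ->
     forall lam : R, 0 <= lam ->
       Lap P (fun z => expR (lam * f z)) x / expR (lam * f x)
         >= Lap P (fun z => expR (lam * f z)) y / expR (lam * f y)
       /\
       Lap P (fun z => expR (- lam * f z)) x / expR (- lam * f x)
         <= Lap P (fun z => expR (- lam * f z)) y / expR (- lam * f y)).
Proof.
case: Hlazy => P0 [Psum Plazy].
have Pxy : 0 < P x y by move: Hxy => /andP[].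
split.
- case=> pi [pi0 [prow [pcol psupp]]] f hf hfxy lam l0.
  have hd z w : pi z w != 0 -> f w - f z <= 1.
    move=> nz; have pp : 0 < pi z w by rewrite lt0r nz pi0.
    have : ((dist P z w)%:R <= 1 :> R) by rewrite lern1; exact: psupp.
    move=> h1; have := le_trans (hf z w) h1; rewrite ler_norml => /andP[a b]; lra.
  split.
  + rewrite !(lap_ratio Psum) lerD2r.
    apply: (@coup_le _ _ (fun i j => pi j i)) => //.
    move=> i j nz; rewrite ler_expR.
    have h1 := hd j i nz.
    have hh : f i - f y <= f j - f x by lra.
    have := ler_wpM2l l0 hh.
    rewrite !mulrBr; lra.
  + rewrite !(lap_ratio Psum) lerD2r.
    apply: (@coup_le _ _ pi) => //.
    move=> i j nz; rewrite ler_expR.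
    have h1 := hd i j nz.
    have hh : f j - f y <= f i - f x by lra.
    have := ler_wpM2l l0 hh.
    rewrite !mulrBr !mulNr; lra.
- move=> Hii.
  have dxy : (dist P x y <= 1)%N := dist_P Pxy.
  have dyx : (dist P y x <= 1)%N by rewrite (dist_sym Hsym).
  have H1 : forall C : {set V}, (forall c, c \in C -> ~~ (dist P x c <= 1)%N) ->
      \sum_(z in C) P y z <= \sum_(z in NB (Ed P) C) P x z.
    move=> C hC; apply: (key P0 Psum Hsym dxy hC) => heq lam l0.
    have [H _] := Hii (hfun P C) (hfun_lip Hsym C) heq lam l0.
    by move: H; rewrite !(lap_ratio Psum) lerD2r.
  have H2 : forall B : {set V}, (forall b, b \in B -> ~~ (dist P y b <= 1)%N) ->
      \sum_(z in B) P x z <= \sum_(z in NB (Ed P) B) P y z.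
    move=> B hB; apply: (key P0 Psum Hsym dyx hB) => heq lam l0.
    have hl : forall u v, `|(fun z => - hfun P B z) u - (fun z => - hfun P B z) v|
                          <= (dist P u v)%:R.
      move=> u v /=.
      have -> : - hfun P B u - - hfun P B v = - (hfun P B u - hfun P B v) by lra.
      rewrite normrN; exact: hfun_lip.
    have hf1 : (fun z => - hfun P B z) y - (fun z => - hfun P B z) x = 1.
      by rewrite /=; lra.
    have [_ H] := Hii _ hl hf1 lam l0.
    have E1 : forall u, \sum_z P u z * expR (- lam * - hfun P B z - - lam * - hfun P B u)
       = \sum_z P u z * expR (lam * hfun P B z - lam * hfun P B u).
      by move=> u; apply: eq_bigr => z _; rewrite !mulrNN.
    by move: H; rewrite !(lap_ratio Psum) lerD2r !E1.
  have sc : forall (g : V -> R) (X : {set V}),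
      \sum_(z in ~: X) g z = \sum_z g z - \sum_(z in X) g z.
    move=> g X; rewrite [\sum_z g z](bigID (fun z => z \in X)) /= addrC addrK.
    by apply: eq_bigl => z; rewrite inE.
  have HC : hallc (Ed P) (P x) (P y).
    move=> B; case: (boolP (x \in B)) => xB.
      pose C := ~: NB (Ed P) B.
      have hC : forall c, c \in C -> ~~ (dist P x c <= 1)%N.
        move=> c; rewrite inE; apply: contra => hc; rewrite inE.
        by apply/exists_inP; exists x.
      have h1 := H1 C hC.
      have s1 : \sum_(z in B) P x z <= \sum_(z in ~: NB (Ed P) C) P x z.
        apply: sum_le_supp => // z _ zB; rewrite inE; apply/negP.
        rewrite inE => /exists_inP [c cC hcz].
        move: cC; rewrite inE => /negP; apply; rewrite inE; apply/exists_inP.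
        by exists z => //; rewrite /Ed (dist_sym Hsym).
      have e1 := sc (P y) C; rewrite /C finset.setCK in e1.
      have e2 := sc (P x) (NB (Ed P) C).
      rewrite e1; rewrite e2 in s1; rewrite !Psum in s1 *; lra.
    pose B2 := [set b in B | ~~ (dist P y b <= 1)%N].
    have hB2 : \sum_(z in B2) P x z <= \sum_(z in NB (Ed P) B2) P y z.
      by apply: H2 => b; rewrite inE => /andP[].
    case: (pickP (fun b => (b \in B) && (dist P y b <= 1)%N)) => [b1 /andP[b1B db1]|hno].
      have yN : y \in NB (Ed P) B.
        by rewrite inE; apply/exists_inP; exists b1 => //; rewrite /Ed (dist_sym Hsym).
      have yN2 : y \notin NB (Ed P) B2.
        rewrite inE; apply/exists_inPn => b; rewrite inE.
        by move=> /andP[_]; rewrite /Ed (dist_sym Hsym).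
      rewrite (big_setID B2) /=.
      have e1 : \sum_(i in B :&: B2) P x i = \sum_(i in B2) P x i.
        by apply: sum_eq_supp => z _; rewrite !inE; case: (z \in B).
      have e2 : \sum_(i in B :\: B2) P x i <= \sum_(i in ~: [set x]) P x i.
        apply: sum_le_supp => // z _; rewrite !inE => /andP[_ zB].
        by apply: contraNneq xB => <-.
      rewrite sc big_set1 Psum in e2.
      have e3 : \sum_(i in y |: NB (Ed P) B2) P y i <= \sum_(i in NB (Ed P) B) P y i.
        apply: sum_le_supp => // z _; rewrite !inE => /orP[/eqP->|]; first by rewrite inE in yN.
        case/exists_inP => b; rewrite inE => /andP[bB _] hb.
        by apply/exists_inP; exists b.
      rewrite big_setU1 //= in e3.
      have := Plazy x; have := Plazy y.
      rewrite e1; lra.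
    have e1 : \sum_(i in B) P x i = \sum_(i in B2) P x i.
      apply: sum_eq_supp => z _; rewrite !inE.
      by have := hno z; case: (z \in B) => //= ->.
    rewrite e1; apply: le_trans hB2 _.
    apply: sum_le_supp => // z _; rewrite !inE => /exists_inP [b].
    by rewrite inE => /andP[bB _] hb; apply/exists_inP; exists b.
  have [pi [pi0 prow pcol psupp]] := hall (fun i => P0 x i) (fun j => P0 y j) HC.
  have pcol_eq : forall j, \sum_i pi i j = P y j.
    have hs : \sum_j (P y j - \sum_i pi i j) = 0.
      rewrite sumrB Psum exchange_big /=.
      under eq_bigr do rewrite prow.
      by rewrite Psum subrr.
    have hnn : forall j, true -> 0 <= P y j - \sum_i pi i j.
      by move=> j' _; rewrite subr_ge0.
    move=> j; have := @psumr_eq0P _ _ (fun _ => true) _ hnn hs j isT.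
    by move/eqP; rewrite subr_eq0 => /eqP <-.
  exists pi; split => //; split => //; split => // x' y' hp.
  by apply: psupp; exact: lt0r_neq0 hp.
Qed.
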